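(* Let $F$ be a Ferrers diagram with at least two rows, let $k$ be the length of the first row of $F$ and $\ell$ the length of the second row. Then the divisor $D_{k+1,1}$ on $R(F)$ has positive rank if and only if $(\ell,k-\ell+1)\in F$.
   Context: $\mathbb{N}=\{1,2,3,\dots\}$. A Ferrers diagram is a finite subset $F\subset\mathbb{N}^2$ such that whenever $(x,y)\in F$, either $x=1$ or $(x-1,y)\in F$, and either $y=1$ or $(x,y-1)\in F$; $x$ is the column index and $y$ the row index (row $y$ is $\{(x',y)\in F\}$, and its length is its cardinality). The Ferrers rook graph $R(F)$ is the simple graph with vertex set $F$ in which distinct $(x,y),(x',y')$ are adjacent iff $x=x'$ or $y=y'$. For $(x,y)\in\mathbb{N}^2$, $D_{x,y}=\sum_{(x',y')\in F,\ x'\neq x,\ y'\neq y}(x',y')$. Divisors on a graph: functions $D:V\to\mathbb{Z}$; firing a vertex $v$ means $v$ loses $\deg(v)$ chips and each neighbor gains one; divisors are equivalent if related by a sequence of firings; $\vert D\vert$ is the set of effective (nonnegative) divisors equivalent to $D$; $D$ has positive rank if for every vertex $v$ some $D'\in\vert D\vert$ has $D'(v)>0$. *)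

(* Defs.v *)
From HB Require Import structures.
From mathcomp Require Import all_boot all_order all_algebra finmap.
From Stdlib Require Import Relations.
Set Implicit Arguments. Unset Strict Implicit. Unset Printing Implicit Defensive.
Import Order.TTheory GRing.Theory Num.Theory.
Local Open Scope fset_scope.
Local Open Scope ring_scope.

(* A cell is (x, y) with x the column index and y the row index; N = {1,2,...}. *)
Definition ferrers (F : {fset nat * nat}) : Prop :=
  forall p, p \in F ->
    [/\ (1 <= p.1)%N, (1 <= p.2)%N,
        p.1 = 1%N \/ (p.1.-1, p.2) \in F
      & p.2 = 1%N \/ (p.1, p.2.-1) \in F].

Definition row_length (F : {fset nat * nat}) (y : nat) : nat :=
  #|` [fset p in F | p.2 == y]|.

Definition num_rows (F : {fset nat * nat}) : nat :=
  #|` [fset p.2 | p in F]|.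

Definition rook_adj (F : {fset nat * nat}) (v w : F) : bool :=
  (v != w) && (((val v).1 == (val w).1) || ((val v).2 == (val w).2)).

Definition rook_deg (F : {fset nat * nat}) (v : F) : nat :=
  #|[set w : F | rook_adj v w]|.

Definition divisor (F : {fset nat * nat}) := F -> int.

Definition fire (F : {fset nat * nat}) (v : F) (D : divisor F) : divisor F :=
  fun w => if w == v then D w - (rook_deg v)%:Z
           else if rook_adj v w then D w + 1 else D w.

Definition fire_step (F : {fset nat * nat}) (D D' : divisor F) : Prop :=
  exists v : F, D' = fire v D.

Definition div_equiv (F : {fset nat * nat}) : relation (divisor F) :=
  clos_refl_sym_trans (divisor F) (@fire_step F).

Definition effective (F : {fset nat * nat}) (D : divisor F) : Prop :=
  forall v : F, 0 <= D v.

Definition positive_rank (F : {fset nat * nat}) (D : divisor F) : Prop :=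
  forall v : F, exists D' : divisor F, [/\ div_equiv D D', effective D' & 0 < D' v].

Definition Dxy (F : {fset nat * nat}) (x y : nat) : divisor F :=
  fun v => if ((val v).1 != x) && ((val v).2 != y) then 1 else 0.

(* Main.v *)
Require Import Defs.
From mathcomp Require Import all_boot all_order all_algebra finmap.
From mathcomp Require Import zify ring lra.
From Stdlib Require Import Relations.
Set Implicit Arguments. Unset Strict Implicit. Unset Printing Implicit Defensive.
Import Order.TTheory GRing.Theory Num.Theory.
Local Open Scope fset_scope.
Local Open Scope ring_scope.

Lemma rook_adjC (F : {fset nat * nat}) (v w : F) : rook_adj v w = rook_adj w v.
Proof. by rewrite /rook_adj eq_sym [(val w).1 == _]eq_sym [(val w).2 == _]eq_sym. Qed.

Lemma rook_adj_irr (F : {fset nat * nat}) (v : F) : rook_adj v v = false.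
Proof. by rewrite /rook_adj eqxx. Qed.

Definition lap (F : {fset nat * nat}) (f : F -> int) (w : F) : int :=
  \sum_(u | rook_adj w u) (f w - f u).

Lemma lapD (F : {fset nat * nat}) (f g : F -> int) w :
  lap (fun u => f u + g u) w = lap f w + lap g w.
Proof.
rewrite /lap -big_split /=; apply: eq_bigr => u _; lra.
Qed.

Lemma lapN (F : {fset nat * nat}) (f : F -> int) w :
  lap (fun u => - f u) w = - lap f w.
Proof. rewrite /lap -sumrN; apply: eq_bigr => u _; lra. Qed.

Lemma lap0 (F : {fset nat * nat}) w : lap (fun _ : F => 0) w = 0.
Proof. by rewrite /lap big1 // => u _; rewrite subrr. Qed.

Lemma sum_ind_card (T : finType) (P Q : pred T) :
  \sum_(u | P u) (if Q u then 1 else 0 : int) = (#|[set u | P u & Q u]|)%:Z.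
Proof.
rewrite -big_mkcondr /= -sum1_card.
rewrite (@eq_bigl _ _ _ _ _ _ (fun u => u \in [set u | P u & Q u])); last by move=> u; rewrite inE.
rewrite -(@big_morph _ _ (fun n : nat => n%:Z) 0 (fun a b => a + b)%R 0%N addn) //.
Qed.

Definition ind (F : {fset nat * nat}) (A : {set F}) (u : F) : int :=
  if u \in A then 1 else 0.

Lemma lap_ind (F : {fset nat * nat}) (A : {set F}) w :
  lap (ind A) w = if w \in A then (#|[set u | rook_adj w u & u \notin A]|)%:Z
                  else - (#|[set u | rook_adj w u & u \in A]|)%:Z.
Proof.
rewrite /lap /ind; case: ifP => wA.
  rewrite -sum_ind_card; apply: eq_bigr => u _; by case: (u \in A).
rewrite -sum_ind_card -sumrN; apply: eq_bigr => u _; by case: (u \in A).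
Qed.

Lemma fire_lap (F : {fset nat * nat}) (v : F) (D : divisor F) w :
  fire v D w = D w - lap (fun u => if u == v then 1 else 0) w.
Proof.
rewrite /fire /lap.
case: eqP => [->|wv].
  congr (_ - _).
  rewrite (@eq_bigr _ _ _ _ _ _ _ (fun u => if predT u then 1 else 0)); last first.
    move=> u Hu /=; case: eqP Hu => [->|_ _]; [by rewrite rook_adj_irr | by rewrite subr0].
  rewrite (sum_ind_card (rook_adj v) predT) /rook_deg; congr (_%:Z); apply: eq_card => u; by rewrite !inE andbT.
rewrite (@eq_bigr _ _ _ _ _ _ _ (fun u => - (if u == v then 1 else 0))); last first.
  by move=> u _; rewrite sub0r.
rewrite sumrN sum_ind_card opprK.
case: ifP => Hadj.
  have -> : [set u | rook_adj w u & u == v] = [set v].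
    apply/setP => u; rewrite !inE; case: eqP => [->|_]; rewrite ?andbF ?andbT //; by rewrite rook_adjC Hadj.
  by rewrite cards1.
have -> : [set u | rook_adj w u & u == v] = set0.
  apply/setP => u; rewrite !inE; case: eqP => [->|_]; rewrite ?andbF ?andbT //; by rewrite rook_adjC Hadj.
by rewrite cards0 addr0.
Qed.

From Stdlib Require Import FunctionalExtensionality.

Lemma equiv_fireseq (F : {fset nat * nat}) (X : divisor F) (s : seq F) :
  uniq s -> div_equiv X (fun w => X w - lap (fun u => if u \in s then 1 else 0) w).
Proof.
elim: s => [_|v s IH /= /andP [vs us]].
  have -> : (fun w => X w - lap (fun u : F => if u \in [::] then 1 else 0) w) = X.
    apply: functional_extensionality => w; rewrite /lap big1 ?subr0 // => u _; by rewrite !in_nil subrr.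
  exact: rst_refl.
apply: rst_trans (IH us) _; apply: rst_step; exists v.
apply: functional_extensionality => w; rewrite fire_lap.
have -> : (fun u => if u \in v :: s then 1 else 0) =
   (fun u => (if u \in s then 1 else 0) + (if u == v then 1 else 0) : int).
  apply: functional_extensionality => u; rewrite in_cons.
  case: eqP => [->|_]; last by rewrite addr0.
  by rewrite (negbTE vs) add0r.
by rewrite lapD opprD addrA.
Qed.

Lemma equiv_fireset (F : {fset nat * nat}) (X : divisor F) (A : {set F}) :
  div_equiv X (fun w => X w - lap (ind A) w).
Proof.
have -> : ind A = (fun u => if u \in enum A then 1 else 0).
  by apply: functional_extensionality => u; rewrite mem_enum.
exact: equiv_fireseq (enum_uniq _).
Qed.

Definition lrel (F : {fset nat * nat}) (D D' : divisor F) : Prop :=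
  exists f : F -> int, forall w, D' w = D w - lap f w.

Lemma equiv_lrel (F : {fset nat * nat}) (D D' : divisor F) :
  div_equiv D D' -> lrel D D'.
Proof.
elim => {D D'}.
- move=> D D' [v ->]; exists (fun u => if u == v then 1 else 0) => w; exact: fire_lap.
- by move=> D; exists (fun _ => 0) => w; rewrite lap0 subr0.
- move=> D D' _ [f Hf]; exists (fun u => - f u) => w; rewrite lapN Hf; lra.
- move=> D1 D2 D3 _ [f Hf] _ [g Hg]; exists (fun u => f u + g u) => w.
  rewrite Hg Hf lapD; lra.
Qed.

Lemma lap_ge (F : {fset nat * nat}) (g : F -> int) (w : F) :
  (forall u, g u <= g w) ->
  (#|[set u | rook_adj w u & g u != g w]|)%:Z <= lap g w.
Proof.
move=> Hmax; rewrite -sum_ind_card /lap; apply: ler_sum => u _.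
have := Hmax u; case: eqP => [->|Hne] H; first by rewrite subrr.
have : g u != g w by apply/eqP.
move=> H2 /=. lia.
Qed.

Lemma reduced_no_chip (F : {fset nat * nat}) (E : divisor F) (v : F) (g : F -> int) :
  E v <= 0 ->
  (forall A : {set F}, v \notin A -> A != set0 ->
     exists2 w, w \in A & E w < (#|[set u | rook_adj w u & u \notin A]|)%:Z) ->
  (forall w, 0 <= E w - lap g w) -> E v - lap g v <= 0.
Proof.
move=> Ev Hred Heff.
case: (@arg_maxP _ _ F v xpredT g isT) => m _ Hm.
have Hm' : forall u, g u <= g m by move=> u; exact: Hm.
pose A := [set w | g w == g m].
have lapA : forall w, w \in A -> (#|[set u | rook_adj w u & u \notin A]|)%:Z <= lap g w.
  move=> w; rewrite inE => /eqP gw.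
  have -> : [set u | rook_adj w u & u \notin A] = [set u | rook_adj w u & g u != g w].
    by apply/setP => u; rewrite !inE gw.
  apply: lap_ge => u; rewrite gw; exact: Hm'.
case vA: (v \in A).
  move: (lapA v vA) (Heff v); set c := (#|_|)%:Z; have : 0 <= c by []. lra.
have [w wA Hw] : exists2 w, w \in A & E w < (#|[set u | rook_adj w u & u \notin A]|)%:Z.
  apply: Hred; first by rewrite vA.
  by apply/set0Pn; exists m; rewrite inE.
have := lapA w wA; have := Heff w; lra.
Qed.
Lemma fer_pos (F : {fset nat * nat}) x y : ferrers F -> (x, y) \in F -> (1 <= x)%N /\ (1 <= y)%N.
Proof. by move=> HF /HF [] /= h1 h2 _ _. Qed.

Lemma row_down (F : {fset nat * nat}) x x' y : ferrers F -> (x, y) \in F ->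
  (1 <= x')%N -> (x' <= x)%N -> (x', y) \in F.
Proof.
move=> HF Hxy H1 Hle.
have : exists d, x = (x' + d)%N by exists (x - x')%N; lia.
case=> d Hd; subst x; clear Hle; elim: d Hxy => [|d IH] H; first by rewrite addn0 in H.
apply: IH; have [_ _ [/= Hc|/= Hc] _] := HF _ H; first lia.
by rewrite addnS /= in Hc.
Qed.

Lemma col_down (F : {fset nat * nat}) x y y' : ferrers F -> (x, y) \in F ->
  (1 <= y')%N -> (y' <= y)%N -> (x, y') \in F.
Proof.
move=> HF Hxy H1 Hle.
have : exists d, y = (y' + d)%N by exists (y - y')%N; lia.
case=> d Hd; subst y; clear Hle; elim: d Hxy => [|d IH] H; first by rewrite addn0 in H.
apply: IH; have [_ _ _ [/= Hc|/= Hc]] := HF _ H; first lia.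
by rewrite addnS /= in Hc.
Qed.

Lemma row_len (F : {fset nat * nat}) x y : ferrers F -> (1 <= x)%N ->
  ((x, y) \in F) = (x <= row_length F y)%N.
Proof.
move=> HF Hx; rewrite /row_length.
apply/idP/idP => H.
  have -> : x = size [seq (i.+1, y) | i <- iota 0 x] by rewrite size_map size_iota.
  apply: uniq_leq_size.
    rewrite map_inj_uniq ?iota_uniq //; by move=> i j [].
  move=> p /mapP [i]; rewrite mem_iota => Hi ->.
  rewrite !inE /= eqxx andbT; apply: row_down H _ _ => //; lia.
apply/negPn/negP => /negP Hn.
have : (row_length F y <= x.-1)%N.
  rewrite /row_length.
  have -> : x.-1 = size [seq (i.+1, y) | i <- iota 0 x.-1] by rewrite size_map size_iota.
  apply: uniq_leq_size; first exact: fset_uniq.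
  move=> [a b]; rewrite !inE /= => /andP [Hab /eqP Hb]; subst b.
  apply/mapP; exists a.-1; last first.
    by have [] := fer_pos HF Hab; case: a Hab => //.
  rewrite mem_iota add0n; apply/negPn/negP => Hc.
  have [Ha _] := fer_pos HF Hab; apply: Hn; apply: row_down Hab _ _ => //; lia.
rewrite /row_length; lia.
Qed.

Local Open Scope ring_scope.

Lemma adjE (F : {fset nat * nat}) (v w : F) :
  rook_adj v w = (val v != val w) && (((val v).1 == (val w).1) || ((val v).2 == (val w).2)).
Proof. by []. Qed.

Definition S0 (F : {fset nat * nat}) : {set F} := [set u : F | (val u).2 != 1%N].
Arguments S0 F : clear implicits.
Definition D0 (F : {fset nat * nat}) : divisor F := @Dxy F (row_length F 1).+1 1.
Arguments D0 F : clear implicits.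
Definition E0 (F : {fset nat * nat}) : divisor F := fun w => D0 F w - lap (ind (S0 F)) w.
Arguments E0 F : clear implicits.

Lemma cell_le_k (F : {fset nat * nat}) (HF : ferrers F) p : p \in F ->
  [/\ (1 <= p.1)%N, (1 <= p.2)%N, (p.1, 1%N) \in F & (p.1 <= row_length F 1)%N].
Proof.
case: p => x y H; have [H1 H2] := fer_pos HF H.
have H3 : (x, 1%N) \in F by apply: col_down H _ _.
by split => //; rewrite -row_len.
Qed.

Lemma D0_val (F : {fset nat * nat}) (HF : ferrers F) w :
  D0 F w = if (val w).2 != 1%N then 1 else 0.
Proof.
rewrite /D0 /Dxy; have [_ _ _ Hk] := cell_le_k HF (fsvalP w).
have -> : ((val w).1 != (row_length F 1).+1) = true by apply/eqP; move=> Hc; rewrite Hc ltnn in Hk.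
by [].
Qed.

Lemma E0_S (F : {fset nat * nat}) (HF : ferrers F) w :
  (val w).2 != 1%N -> E0 F w = 0.
Proof.
move=> Hw; rewrite /E0 D0_val // Hw lap_ind.
have wS : w \in S0 F by rewrite inE.
rewrite wS.
have [_ _ H1 _] := cell_le_k HF (fsvalP w).
set u1 : F := [` H1].
have -> : [set u | rook_adj w u & u \notin S0 F] = [set u1].
  apply/setP => u; rewrite !inE adjE negbK.
  apply/idP/idP.
    case/andP => /andP [Hne Hor] /eqP Hu; apply/eqP/val_inj => /=.
    move: Hor; rewrite Hu (negbTE Hw) orbF => /eqP E1; rewrite -Hu E1; exact: surjective_pairing.
  move=> /eqP ->; rewrite /= eqxx /= andbT.
  apply/andP; split => //. apply/eqP => Hc. by move: Hw; change (val w) with (fsval w); rewrite Hc.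
by rewrite cards1 subrr.
Qed.

Lemma E0_row1 (F : {fset nat * nat}) (HF : ferrers F) w :
  (val w).2 = 1%N -> E0 F w = (#|[set u | rook_adj w u & u \in S0 F]|)%:Z.
Proof.
move=> Hw; rewrite /E0 D0_val // Hw /= lap_ind.
have -> : (w \in S0 F) = false by rewrite inE Hw.
by rewrite sub0r opprK.
Qed.

Lemma E0_ge0 (F : {fset nat * nat}) (HF : ferrers F) w : 0 <= E0 F w.
Proof.
case: (eqVneq (val w).2 1%N) => H; first by rewrite E0_row1.
by rewrite E0_S.
Qed.

Lemma card_lb (F : {fset nat * nat}) (A : {set F}) (s : seq (nat * nat)) :
  uniq s -> (forall p, p \in s -> exists2 u : F, val u = p & u \in A) -> (size s <= #|A|)%N.
Proof.
move=> us Hs; rewrite cardE -(size_map val).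
apply: uniq_leq_size => // p /Hs [u <- uA]; apply: map_f; by rewrite mem_enum.
Qed.

Lemma card_ub (F : {fset nat * nat}) (A : {set F}) (s : seq (nat * nat)) :
  (forall u, u \in A -> val u \in s) -> (#|A| <= size s)%N.
Proof.
move=> Hs; rewrite cardE -(size_map val).
apply: uniq_leq_size.
  rewrite map_inj_uniq ?enum_uniq //; exact: val_inj.
move=> p /mapP [u]; rewrite mem_enum => uA ->; exact: Hs.
Qed.

Lemma shape (F : {fset nat * nat}) (HF : ferrers F) :
  (2 <= num_rows F)%N ->
  [/\ (1 <= row_length F 2)%N, (row_length F 2 <= row_length F 1)%N,
   forall x, ((x,1%N) \in F) = (1 <= x <= row_length F 1)%N,
   forall x, ((x,2%N) \in F) = (1 <= x <= row_length F 2)%N &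
   forall x y, (x,y) \in F -> (2 <= y)%N -> (x <= row_length F 2)%N ].
Proof.
move=> Hn.
have R1 : forall x y, ((x,y) \in F) = (1 <= x <= row_length F y)%N.
  move=> x y; case: (leqP 1 x) => Hx /=.
    by rewrite -row_len.
  apply/negbTE/negP => H; have [] := fer_pos HF H; lia.
have R3 : forall x y, (x,y) \in F -> (2 <= y)%N -> (x <= row_length F 2)%N.
  move=> x y H Hy; have [Hx _] := fer_pos HF H.
  have : (x, 2%N) \in F by apply: col_down H _ _.
  by rewrite R1 => /andP [].
have [p pF p2] : exists2 p, p \in F & p.2 != 1%N.
  case: (boolP (has (fun p : nat * nat => p.2 != 1%N) (enum_fset F))) => [/hasP [p] pF p2|].
    by exists p.
  move/hasPn => Hall; exfalso.
  have : (num_rows F <= size [:: 1%N])%N.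
    apply: uniq_leq_size; first exact: fset_uniq.
    move=> y /imfsetP [q /= qF ->]; rewrite inE; exact/negPn/Hall.
  rewrite /=; lia.
have [Hp1 Hp2] : (1 <= p.1)%N /\ (1 <= p.2)%N by case: p pF p2 => a b /(fer_pos HF).
have Hl : (1 <= row_length F 2)%N.
  have := R3 p.1 p.2; rewrite -surjective_pairing => /(_ pF); lia.
have Hlk : (row_length F 2 <= row_length F 1)%N.
  have : (row_length F 2, 2%N) \in F by rewrite R1 Hl leqnn.
  move=> H; have := @col_down F _ 2%N 1%N HF H isT isT; by rewrite R1 => /andP [].
by split.
Qed.

Lemma pos_dir (F : {fset nat * nat}) (HF : ferrers F) :
  (2 <= num_rows F)%N ->
  (row_length F 2, (row_length F 1 - row_length F 2 + 1)%N) \in F ->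
  positive_rank (D0 F).
Proof.
move=> Hn Hc.
have [Hl Hlk R1 R2 R3] := shape HF Hn.
set k := row_length F 1 in Hlk R1 Hc *; set l := row_length F 2 in Hl Hlk R2 R3 Hc *.
move=> [[x y] vF].
have [Hx Hy _ Hxk] := cell_le_k HF vF; rewrite /= in Hx Hy Hxk.
case: (eqVneq y 1%N) => Hy1; last first.
  exists (D0 F); split; first exact: rst_refl.
    by move=> w; rewrite D0_val //; case: ifP.
  by rewrite D0_val //= Hy1.
subst y.
case: (leqP x l) => Hxl.
  exists (E0 F); split; [exact: equiv_fireset | exact: E0_ge0 |].
  rewrite E0_row1 // ltz_nat card_gt0; apply/set0Pn.
  have H2 : (x, 2%N) \in F by rewrite R2 Hx Hxl.
  exists [` H2]; rewrite !inE adjE /= eqxx /= andbT.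
  by rewrite /= xpair_eqE eqxx.
pose C : {set F} := [set u : F | ((val u).1 <= l)%N].
exists (fun w => E0 F w - lap (ind C) w); split.
- exact: rst_trans (equiv_fireset (D0 F) (S0 F)) (equiv_fireset (E0 F) C).
- move=> [[a b] wF]; rewrite lap_ind.
  have [Ha Hb H1b Hak] := cell_le_k HF wF; rewrite /= in Ha Hb H1b Hak.
  case: ifP => wC; last by have := E0_ge0 HF [` wF]; lia.
  rewrite inE /= in wC.
  case: (eqVneq b 1%N) => Hb1; last first.
    rewrite E0_S //.
    have : (#|[set u | rook_adj [` wF] u & u \notin C]| <= size ([::] : seq (nat*nat)))%N.
      apply: card_ub => -[[c d] uF]; rewrite !inE adjE /= => /andP [/andP [_ Hor] Hc'].
      exfalso; case/orP: Hor => /eqP E.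
        by subst c; rewrite wC in Hc'.
      subst d; rewrite (R3 _ _ uF) // in Hc'; lia.
    rewrite /=; lia.
  subst b; rewrite E0_row1 //.
  have Hup : (#|[set u | rook_adj [` wF] u & u \notin C]| <= k - l)%N.
    have -> : (k - l)%N = size [seq (l + i.+1, 1%N) | i <- iota 0 (k - l)] by rewrite size_map size_iota.
    apply: card_ub => -[[c d] uF]; rewrite !inE adjE /= => /andP [/andP [_ Hor] Hc'].
    have [Hc1 Hd1 _ Hck] := cell_le_k HF uF; rewrite /= in Hc1 Hd1 Hck.
    have Hd : d = 1%N.
      case/orP: Hor => /eqP E; last by [].
      by subst c; rewrite wC in Hc'.
    subst d; apply/mapP; exists (c - l).-1; last by congr pair; lia.
    rewrite mem_iota; lia.
  have Hlo : (k - l <= #|[set u | rook_adj [` wF] u & u \in S0 F]|)%N.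
    have -> : (k - l)%N = size [seq (a, i.+2) | i <- iota 0 (k - l)] by rewrite size_map size_iota.
    apply: card_lb.
      rewrite map_inj_uniq ?iota_uniq //; by move=> i j [].
    move=> p /mapP [i]; rewrite mem_iota => Hi ->.
    have Hli : (l, i.+2) \in F by apply: col_down Hc _ _ => //; lia.
    have Hai : (a, i.+2) \in F by apply: row_down Hli _ _.
    exists [` Hai] => //; rewrite !inE adjE /= eqxx /= andbT.
    by rewrite /= xpair_eqE eqxx.
  lia.
- rewrite /= lap_ind.
  have -> : ([` vF] \in C) = false by rewrite inE /=; lia.
  have := E0_ge0 HF [` vF].
  have : (0 < #|[set u | rook_adj [` vF] u & u \in C]|)%N.
    rewrite card_gt0; apply/set0Pn.
    have Hl1 : (l, 1%N) \in F by rewrite R1 Hl Hlk.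
    exists [` Hl1]; rewrite !inE adjE /= eqxx orbT andbT leqnn andbT.
    apply/eqP => -[]; lia.
  move=> h1 h2; rewrite opprK; move: h1; rewrite -ltz_nat; move: h2; set c := (#|_|)%:Z; lra.
Qed.

Lemma neq_val (F : {fset nat * nat}) (A : {set F}) (w u : F) :
  w \in A -> u \notin A -> val w != val u.
Proof. move=> wA uA; apply/eqP => /val_inj E; subst; by rewrite wA in uA. Qed.

Lemma neg_dir (F : {fset nat * nat}) (HF : ferrers F) :
  (2 <= num_rows F)%N ->
  (row_length F 2, (row_length F 1 - row_length F 2 + 1)%N) \notin F ->
  positive_rank (D0 F) -> False.
Proof.
move=> Hn Hc Hpr.
have [Hl Hlk R1 R2 R3] := shape HF Hn.
set k := row_length F 1 in Hlk R1 Hc Hpr *; set l := row_length F 2 in Hl Hlk R2 R3 Hc *.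
clearbody k l.
have Hkl : (l < k)%N.
  rewrite ltn_neqAle Hlk andbT; apply/eqP => E.
  move: Hc; rewrite -E subnn add0n; by rewrite R1 Hl Hlk.
have Hk1 : (k, 1%N) \in F by rewrite R1 leqnn andbT; lia.
pose v0 : F := [` Hk1].
have [D' [Heq Heff Hpos]] := Hpr v0.
have [f Hf] := equiv_lrel Heq.
pose S := S0 F.
pose g := fun u => f u + - ind S u.
have Heff' : forall w, 0 <= E0 F w - lap g w.
  move=> w; rewrite /g (lapD f (fun u => - ind S u)) lapN /E0.
  have := Heff w; rewrite Hf; lra.
have Ev0 : E0 F v0 <= 0.
  rewrite E0_row1 //.
  have : (#|[set u | rook_adj v0 u & u \in S0 F]| <= size ([::] : seq (nat*nat)))%N.
    apply: card_ub => -[[c d] uF]; rewrite !inE adjE /= => /andP [/andP [_ Hor] Hd].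
    exfalso; case/orP: Hor => /eqP E.
      subst c; have [_ Hd1] := fer_pos HF uF; have := R3 _ _ uF; lia.
    by subst d.
  rewrite /= leqn0 => /eqP ->; by [].
suff Hburn : forall A : {set F}, v0 \notin A -> A != set0 ->
     exists2 w, w \in A & E0 F w < (#|[set u | rook_adj w u & u \notin A]|)%:Z.
  have := reduced_no_chip Ev0 Hburn Heff'.
  have : E0 F v0 - lap g v0 = D' v0.
    rewrite /g (lapD f (fun u => - ind S u)) lapN /E0 Hf; lra.
  move=> ->; move: Hpos; lra.
move=> A v0A Ane.
case: (boolP [exists w in A, E0 F w < (#|[set u | rook_adj w u & u \notin A]|)%:Z]).
  by move/exists_inP.
move/exists_inPn => Hall'.
have Hall : forall w, w \in A -> (#|[set u | rook_adj w u & u \notin A]|)%:Z <= E0 F w.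
  move=> w /Hall'; by rewrite -leNgt.
have nbr_out : forall w u, w \in A -> rook_adj w u -> u \notin A -> E0 F w <= 0 -> False.
  move=> w u wA Hadj uA Hw.
  have : (0 < #|[set u | rook_adj w u & u \notin A]|)%N.
    rewrite card_gt0; apply/set0Pn; exists u; by rewrite !inE Hadj uA.
  have h2 := le_trans (Hall w wA) Hw; rewrite lez_nat leqn0 in h2; by rewrite (eqP h2).
have P1 : forall c (hF : (c, 1%N) \in F), (l < c)%N -> [` hF] \notin A.
  move=> c hF Hlc; apply/negP => wA.
  apply: (nbr_out _ v0 wA _ v0A).
    by rewrite adjE (neq_val wA v0A) andTb; apply/orP; right; exact: isT.
  rewrite E0_row1 //.
  have : (#|[set u | rook_adj [` hF] u & u \in S0 F]| <= size ([::] : seq (nat*nat)))%N.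
    apply: card_ub => -[[c' d] uF]; rewrite !inE adjE /= => /andP [/andP [_ Hor] Hd].
    exfalso; case/orP: Hor => /eqP E.
      subst c'; have [_ Hd1] := fer_pos HF uF; have := R3 _ _ uF; lia.
    by subst d.
  rewrite /= leqn0 => /eqP ->; by [].
have Hl1 : (l, 1%N) \in F by rewrite R1 Hl Hlk.
have P2 : [` Hl1] \notin A.
  apply/negP => wA.
  have Hup : (#|[set u | rook_adj [` Hl1] u & u \in S0 F]| <= (k - l).-1)%N.
    have -> : (k - l).-1 = size [seq (l, i.+2) | i <- iota 0 (k - l).-1] by rewrite size_map size_iota.
    apply: card_ub => -[[c d] uF]; rewrite !inE adjE /= => /andP [/andP [_ Hor] Hd].
    have [Hc1 Hd1 _ Hck] := cell_le_k HF uF; rewrite /= in Hc1 Hd1 Hck.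
    have Ec : c = l.
      case/orP: Hor => /eqP E; first by [].
      by subst d.
    subst c.
    have Hdk : (d <= k - l)%N.
      rewrite leqNgt; apply/negP => Hlt; move: Hc => /negP; apply.
      apply: (col_down HF uF); lia.
    apply/mapP; exists (d - 2)%N; last by congr pair; lia.
    rewrite mem_iota; lia.
  have Hlo : (k - l <= #|[set u | rook_adj [` Hl1] u & u \notin A]|)%N.
    have -> : (k - l)%N = size [seq (l + i.+1, 1%N) | i <- iota 0 (k - l)] by rewrite size_map size_iota.
    apply: card_lb.
      rewrite map_inj_uniq ?iota_uniq //; move=> i j [] ?; lia.
    move=> p /mapP [i]; rewrite mem_iota => Hi ->.
    have Hi1 : (l + i.+1, 1%N) \in F by rewrite R1; lia.
    exists [` Hi1] => //; rewrite !inE adjE /= eqxx orbT andbT.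
    rewrite (P1 _ Hi1) ?andbT; last lia.
    rewrite xpair_eqE negb_and; apply/orP; left; apply/eqP; lia.
  have := Hall _ wA; rewrite E0_row1 // lez_nat => Hle.
  move: Hup Hlo Hle Hkl; clear; move: (#|_|) (#|_|) => c1 c2.
  lia.
have Hclosed : forall w u, w \in A -> (val w).2 != 1%N -> rook_adj w u -> u \in A.
  move=> w u wA Hw Hadj; apply/negPn/negP => uA.
  apply: (nbr_out w u wA Hadj uA); by rewrite E0_S.
have P3 : forall w, (val w).2 != 1%N -> w \notin A.
  move=> [[a b] wF] /= Hb; apply/negP => wA.
  have [Ha Hb1 _ _] := cell_le_k HF wF; rewrite /= in Ha Hb1.
  have Ha2 : (a, 2%N) \in F by apply: (col_down HF wF); lia.
  have w2A : [` Ha2] \in A.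
    case: (eqVneq b 2%N) => Eb.
      by rewrite (_ : [` Ha2] = [` wF]) //; apply: val_inj => /=; rewrite Eb.
    apply: (Hclosed _ _ wA) => //; rewrite adjE /= eqxx /= andbT xpair_eqE eqxx /=.
    exact: Eb.
  have Hal : (a <= l)%N by apply: (R3 _ _ wF); lia.
  have Hl2 : (l, 2%N) \in F by rewrite R2 Hl leqnn.
  have wlA : [` Hl2] \in A.
    case: (eqVneq a l) => Ea.
      by rewrite (_ : [` Hl2] = [` Ha2]) //; apply: val_inj => /=; rewrite Ea.
    apply: (Hclosed _ _ w2A) => //; rewrite adjE /= eqxx orbT andbT xpair_eqE eqxx andbT.
    exact: Ea.
  have : [` Hl1] \in A.
    apply: (Hclosed _ _ wlA) => //; by rewrite adjE /= eqxx /= andbT xpair_eqE eqxx.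
  by rewrite (negbTE P2).
have P4 : forall a (hF : (a, 1%N) \in F), (a <= l)%N -> [` hF] \notin A.
  move=> a hF Hal; apply/negP => wA.
  have := Hall _ wA; rewrite E0_row1 // lez_nat leqNgt => /negP; apply.
  apply: proper_card; apply/properP; split.
    apply/subsetP => u; rewrite !inE => /andP [-> uS]; rewrite andTb.
    exact: P3.
  exists v0; last by rewrite !inE negb_and orbC /=.
  rewrite !inE v0A andbT adjE (neq_val wA v0A) /= eqxx orbT //.
case/set0Pn: Ane => -[[a b] wF] wA.
case: (eqVneq b 1%N) => Hb.
  subst b; case: (leqP a l) => Hal.
    by rewrite (negbTE (P4 _ wF Hal)) in wA.
  by rewrite (negbTE (P1 _ wF Hal)) in wA.
by rewrite (negbTE (P3 [` wF] Hb)) in wA.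
Qed.

Local Close Scope ring_scope.
Unset Implicit Arguments.

Theorem proposition3p2 (F : {fset nat * nat}) :
  ferrers F -> (2 <= num_rows F)%N ->
  let k := row_length F 1 in
  let l := row_length F 2 in
  positive_rank (@Dxy F k.+1 1) <-> (l, (k - l + 1)%N) \in F.
Proof.
move=> HF Hn k l; split.
  move=> Hpr; apply/negPn/negP => Hc; exact: (neg_dir HF Hn Hc Hpr).
move=> Hc; exact: (pos_dir HF Hn Hc).
Qed.
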